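(* Let $q$ be a prime power, $m\ge1$, $g_1,\dots,g_n\in\mathbb{F}_{q^m}$ linearly independent over $\mathbb{F}_q$, $\mathbf g=(g_1,\dots,g_n)$, and $\mathbf r=(r_1,\dots,r_n)\in\mathbb{F}_{q^m}^n$. Assume the $q$-annihilator polynomials $\Pi_{\langle g_1,\dots,g_i\rangle}(x)$, $i=1,\dots,n$, have been precomputed. Then the $q$-Lagrange polynomial $\Lambda_{\mathbf g,\mathbf r}(x)$ can be computed with at most $\mathcal{O}_{q^m}(n^2)$ operations.
   Context: Write $[i]:=q^i$. $\Pi_{\langle g_1,\dots,g_i\rangle}(x)=\prod_{u\in\langle g_1,\dots,g_i\rangle}(x-u)$ (product over the $\mathbb{F}_q$-linear span). $\Lambda_{\mathbf g,\mathbf r}(x)=\sum_{i=1}^n(-1)^{n-i}r_i\det(\mathfrak D_i(\mathbf g,x))/\det(M_n(g_1,\dots,g_n))$, where $M_n(v_1,\dots,v_s)$ is the $n\times s$ matrix with $(j,l)$ entry $v_l^{[j-1]}$ and $\mathfrak D_i(\mathbf g,x)$ is $M_n(g_1,\dots,g_n,x)$ with column $i$ removed; it is a $q$-linearized polynomial $\sum_{i=0}^{n-1}a_ix^{[i]}$ with $\Lambda_{\mathbf g,\mathbf r}(g_i)=r_i$, to be computed as its list of coefficients. Complexity conventions: elements of $\mathbb{F}_{q^m}$ are stored as coordinate vectors w.r.t. a normal basis of $\mathbb{F}_{q^m}$ over $\mathbb{F}_q$, so $q$-th powers are free; $\mathcal{O}_{q^m}(\cdot)$ counts arithmetic operations in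 $\mathbb{F}_{q^m}$. *)

(* Defs.v *)
From HB Require Import structures.
From mathcomp Require Import all_boot all_order all_algebra.
Set Implicit Arguments. Unset Strict Implicit. Unset Printing Implicit Defensive.
Import GRing.Theory.
Local Open Scope ring_scope.

Section Defs.
Variable F : finFieldType.
Variable q : nat.

Definition prime_power (q : nat) : Prop :=
  exists p k : nat, [/\ prime p, (0 < k)%N & q = (p ^ k)%N].

Definition qpow (x : F) (i : nat) : F := x ^+ (q ^ i).

Definition inFq (x : F) : bool := x ^+ q == x.

Definition lin_indep_Fq (n : nat) (g : 'I_n -> F) : Prop :=
  forall c : 'I_n -> F, (forall i, inFq (c i)) ->
    \sum_(i < n) c i * g i = 0 -> forall i, c i = 0.

Definition in_span (k : nat) (gk : 'I_k -> F) (u : F) : bool :=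
  [exists c : {ffun 'I_k -> F}, [forall i, inFq (c i)] && (u == \sum_(i < k) c i * gk i)].

Definition annPoly (k : nat) (gk : 'I_k -> F) : {poly F} :=
  \prod_(u : F | in_span gk u) ('X - u%:P).

(* prefix (g_1,...,g_{i+1}) for 0-indexed i *)
Definition gprefix (n : nat) (g : 'I_n -> F) (i : 'I_n) : 'I_i.+1 -> F :=
  fun k => g (widen_ord (ltn_ord i) k).

Definition moore (n : nat) (g : 'I_n -> F) : 'M[F]_n :=
  \matrix_(j < n, l < n) qpow (g l) j.

Definition gxcol (n : nat) (g : 'I_n -> F) (l : 'I_n.+1) (j : nat) : {poly F} :=
  match unlift ord_max l with
  | Some l' => (qpow (g l') j)%:P
  | None => 'X^(q ^ j)
  end.

(* D_i(g,x): M_n(g_1,...,g_n,x) with column i removed (0-indexed i) *)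
Definition Dmat (n : nat) (g : 'I_n -> F) (i : 'I_n) : 'M[{poly F}]_n :=
  \matrix_(j < n, l < n) gxcol g (lift (widen_ord (leqnSn n) i) l) j.

Definition qLagrange (n : nat) (g r : 'I_n -> F) : {poly F} :=
  \sum_(i < n) (((-1) ^+ (n - i.+1) * r i) / \det (moore g)) *: \det (Dmat g i).

End Defs.

(* Each instruction appends one value to the state; operands are indices into
   the state.  Frobenius powers x^{[k]} are free (normal basis convention);
   additions, subtractions, multiplications and inversions cost 1.
   Inverting 0 aborts the computation. *)
Inductive instr (F : Type) :=
| IConst of F
| IAdd of nat & nat
| ISub of nat & nat
| IMul of nat & nat
| IInv of nat
| IFrob of nat & nat.

Section SLP.
Variable F : fieldType.
Variable q : nat.

Definition step (st : seq F) (ins : instr F) : option F :=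
  match ins with
  | IConst c => Some c
  | IAdd a b => Some (st`_a + st`_b)
  | ISub a b => Some (st`_a - st`_b)
  | IMul a b => Some (st`_a * st`_b)
  | IInv a => if st`_a == 0 then None else Some (st`_a)^-1
  | IFrob k a => Some (st`_a ^+ (q ^ k))
  end.

Fixpoint run (st : seq F) (P : seq (instr F)) : option (seq F) :=
  match P with
  | [::] => Some st
  | ins :: P' => match step st ins with
                 | Some v => run (rcons st v) P'
                 | None => None
                 end
  end.

Definition is_arith (ins : instr F) : bool :=
  match ins with
  | IAdd _ _ | ISub _ _ | IMul _ _ | IInv _ => true
  | _ => false
  end.

Definition cost (P : seq (instr F)) : nat := count is_arith P.
End SLP.

(* input layout: g_1..g_n, r_1..r_n, then the q-coefficients of Pi_1..Pi_n *)
Definition slp_inputs (F : Type) (n : nat) (g r : 'I_n -> F)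
  (b : 'I_n -> 'I_n.+1 -> F) : seq F :=
  [seq g i | i <- enum 'I_n] ++ [seq r i | i <- enum 'I_n] ++
  flatten [seq [seq b i j | j <- enum 'I_n.+1] | i <- enum 'I_n].

Arguments gprefix {F n} g i _.
Arguments annPoly {F} q {k} gk.

(* Main.v *)
Require Import Defs.
From HB Require Import structures.
From mathcomp Require Import all_boot all_order all_algebra all_field.
From mathcomp Require Import zify ring.
Import GRing.Theory.
Local Open Scope ring_scope.
Set Implicit Arguments. Unset Strict Implicit. Unset Printing Implicit Defensive.


Section SLPlemmas.
Variable F : fieldType.
Variable q : nat.

Lemma run_cat (st : seq F) P1 P2 :
  run q st (P1 ++ P2) = if run q st P1 is Some st' then run q st' P2 else None.
Proof.
elim: P1 st => [|i P1 IH] st //=; case: (step q st i) => // v; exact: IH.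
Qed.

Lemma nth_catl (s t : seq F) k : (k < size s)%N -> (s ++ t)`_k = s`_k.
Proof. by move=> h; rewrite nth_cat h. Qed.

Lemma nth_catr (s t : seq F) k : (s ++ t)`_(size s + k) = t`_k.
Proof. by rewrite nth_cat ltnNge leq_addr /= addKn. Qed.

Lemma nth_rcons_lt (s : seq F) x k : (k < size s)%N -> (rcons s x)`_k = s`_k.
Proof. by move=> h; rewrite nth_rcons h. Qed.

Lemma nth_rcons_eq (s : seq F) x k : k = size s -> (rcons s x)`_k = x.
Proof. by move=> ->; rewrite nth_rcons ltnn eqxx. Qed.

Fixpoint dotp (s G : nat) (L : nat -> nat) (m : nat) : seq (instr F) :=
  if m is m'.+1 then dotp s G L m' ++
    [:: IFrob F m' G; IMul F (L m') (s + 3 * m' + 1)%N;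
        IAdd F (s + 3 * m')%N (s + 3 * m' + 2)%N]
  else [:: IConst 0].

Lemma run_dotp (st : seq F) s G L m :
  size st = s -> (G < s)%N -> (forall j, (j < m)%N -> (L j < s)%N) ->
  exists t, run q st (dotp s G L m) = Some (st ++ t) /\ size t = (3 * m + 1)%N /\
    (st ++ t)`_(s + 3 * m) = \sum_(j < m) st`_(L j) * st`_G ^+ (q ^ j).
Proof.
move=> Hs HG; elim: m => [|m IH] HL.
  exists [:: 0]; split; first by rewrite /= cats1.
  split=> //. rewrite big_ord0 muln0 -Hs. exact: nth_catr.
have [t [Hr [Ht Hv]]] := IH (fun j hj => HL j (ltnW hj)).
set u := st ++ t.
have Hu : size u = (s + 3 * m + 1)%N by rewrite size_cat Hs Ht addnA.
have HLm := HL m (ltnSn m).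
set v1 := u`_G ^+ (q ^ m).
set v2 := u`_(L m) * v1.
set v3 := u`_(s + 3 * m) + v2.
exists (t ++ [:: v1; v2; v3]); split.
  rewrite /= run_cat Hr /= -/u -/v1.
  rewrite nth_rcons_lt ?Hu; last lia.
  rewrite nth_rcons_eq ?Hu // -/v2.
  rewrite nth_rcons_lt ?size_rcons ?Hu; last lia.
  rewrite nth_rcons_lt ?Hu; last lia.
  rewrite nth_rcons_eq ?size_rcons ?Hu; last lia.
  by rewrite -/v3 catA -/u -!cats1 -!catA.
split; first by rewrite size_cat Ht /=; lia.
rewrite catA -/u (_ : (s + 3 * m.+1 = size u + 2)%N); last by rewrite Hu; lia.
rewrite nth_catr /= /v3 Hv big_ord_recr /= /v2 /v1 /u !nth_catl ?Hs //; lia.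
Qed.

Fixpoint upd (s0 C : nat) (L P : nat -> nat) (m : nat) : seq (instr F) :=
  if m is m'.+1 then upd s0 C L P m' ++
    [:: IMul F C (P m'); IAdd F (L m') (s0 + 2 * m')%N]
  else [::].

Lemma run_upd (st : seq F) s0 C L P m :
  size st = s0 -> (C < s0)%N -> (forall j, (j < m)%N -> (L j < s0)%N /\ (P j < s0)%N) ->
  exists t, run q st (upd s0 C L P m) = Some (st ++ t) /\ size t = (2 * m)%N /\
    forall j, (j < m)%N -> (st ++ t)`_(s0 + 2 * j + 1) = st`_(L j) + st`_C * st`_(P j).
Proof.
move=> Hs HC; elim: m => [|m IH] HL.
  by exists [::]; rewrite cats0; split=> //; split=> //.
have [t [Hr [Ht Hv]]] := IH (fun j hj => HL j (ltnW hj)).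
set u := st ++ t.
have Hu : size u = (s0 + 2 * m)%N by rewrite size_cat Hs Ht.
have [HLm HPm] := HL m (ltnSn m).
set v1 := u`_C * u`_(P m).
set v2 := u`_(L m) + v1.
exists (t ++ [:: v1; v2]); split.
  rewrite /= run_cat Hr /= -/u -/v1.
  rewrite nth_rcons_lt ?Hu; last lia.
  rewrite nth_rcons_eq ?Hu // -/v2.
  by rewrite catA -/u -!cats1 -!catA.
split; first by rewrite size_cat Ht /=; lia.
move=> j; rewrite ltnS leq_eqVlt => /orP [/eqP -> | hj].
  rewrite catA -/u (_ : (s0 + 2 * m + 1 = size u + 1)%N); last by rewrite Hu.
  by rewrite nth_catr /= /v2 /v1 /u !nth_catl ?Hs //; lia.
rewrite catA -/u nth_catl ?Hu; last lia.
by rewrite Hv.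
Qed.

Definition blk (n s G R : nat) (L P : nat -> nat) : seq (instr F) :=
  dotp s G L n ++ dotp (s + 3 * n + 1) G P n ++
  [:: ISub F R (s + 3 * n)%N; IInv F (s + 6 * n + 1)%N;
      IMul F (s + 6 * n + 2)%N (s + 6 * n + 3)%N] ++
  upd (s + 6 * n + 5) (s + 6 * n + 4) L P n.

Lemma run_blk (st : seq F) n s G R L P :
  size st = s -> (G < s)%N -> (R < s)%N ->
  (forall j, (j < n)%N -> (L j < s)%N /\ (P j < s)%N) ->
  \sum_(j < n) st`_(P j) * st`_G ^+ (q ^ j) != 0 ->
  exists t, run q st (blk n s G R L P) = Some (st ++ t) /\ size t = (8 * n + 5)%N /\
    forall j, (j < n)%N -> (st ++ t)`_(s + 6 * n + 6 + 2 * j) =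
      st`_(L j) + ((st`_R - \sum_(j < n) st`_(L j) * st`_G ^+ (q ^ j)) /
                   \sum_(j < n) st`_(P j) * st`_G ^+ (q ^ j)) * st`_(P j).
Proof.
move=> Hs HG HR HLP Hp.
have [t1 [Hr1 [Ht1 Hv1]]] := run_dotp Hs HG (fun j hj => (HLP j hj).1).
set u1 := st ++ t1.
have Hu1 : size u1 = (s + 3 * n + 1)%N by rewrite size_cat Hs Ht1; lia.
have [t2 [Hr2 [Ht2 Hv2]]] := run_dotp (G := G) (L := P) (m := n) Hu1
   ltac:(rewrite ?size_cat ?Hs ?Ht1 ?Hu1; lia)
   (fun j hj => let: conj _ b := HLP j hj in ltac:(rewrite ?size_cat ?Hs ?Ht1 ?Hu1; lia)).
set u2 := u1 ++ t2.
have Hu2 : size u2 = (s + 6 * n + 2)%N by rewrite size_cat Hu1 Ht2; lia.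
have E : forall k, (k < s)%N -> u2`_k = st`_k.
  by move=> k hk; rewrite /u2 /u1 -catA nth_catl // Hs.
set e := u1`_(s + 3 * n).
set p := u2`_(s + 3 * n + 1 + 3 * n).
have Ee : e = \sum_(j < n) st`_(L j) * st`_G ^+ (q ^ j) by rewrite /e Hv1.
have Ep : p = \sum_(j < n) st`_(P j) * st`_G ^+ (q ^ j).
  rewrite /p Hv2; apply: eq_bigr => j _.
  have [_ hP] := HLP j (ltn_ord j); by rewrite /u1 !nth_catl ?Hs.
have Ee2 : u2`_(s + 3 * n) = e by rewrite /u2 nth_catl // Hu1; lia.
have Ep2 : u2`_(s + 6 * n + 1) = p by rewrite /p; congr (_`__); lia.
set w1 := u2`_R - u2`_(s + 3 * n).
set w2 := (u2`_(s + 6 * n + 1))^-1.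
set w3 := w1 * w2.
set u3 := u2 ++ [:: w1; w2; w3].
have Hu3 : size u3 = (s + 6 * n + 5)%N by rewrite size_cat Hu2 /=; lia.
have Hr3 : run q u2 [:: ISub F R (s + 3 * n)%N; IInv F (s + 6 * n + 1)%N;
      IMul F (s + 6 * n + 2)%N (s + 6 * n + 3)%N] = Some u3.
  rewrite /= -/w1 nth_rcons_lt ?Hu2; last lia.
  rewrite Ep2 Ep (negbTE Hp) -Ep -Ep2 -/w2.
  rewrite nth_rcons_lt ?size_rcons ?Hu2; last lia.
  rewrite nth_rcons_eq ?Hu2 // nth_rcons_eq; last by rewrite size_rcons Hu2; lia.
  rewrite -/w3.
  by rewrite /u3 -!cats1 -!catA.
have HC : u3`_(s + 6 * n + 4) = w3.
  rewrite /u3 (_ : (s + 6 * n + 4 = size u2 + 2)%N); last by rewrite Hu2; lia.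
  by rewrite nth_catr.
have HLP' : forall j, (j < n)%N -> (L j < s + 6 * n + 5)%N /\ (P j < s + 6 * n + 5)%N.
  by move=> j hj; have [? ?] := HLP j hj; split; lia.
have HC4 : (s + 6 * n + 4 < s + 6 * n + 5)%N by lia.
have [t4 [Hr4 [Ht4 Hv4]]] := run_upd Hu3 HC4 HLP'.
exists (t1 ++ t2 ++ [:: w1; w2; w3] ++ t4); split.
  rewrite /blk run_cat Hr1 run_cat -/u1 Hr2 run_cat -/u2 Hr3 Hr4.
  by rewrite /u3 /u2 /u1 !catA.
split; first by rewrite !size_cat Ht1 Ht2 Ht4 /=; lia.
move=> j hj; have [HLj HPj] := HLP j hj.
have -> : st ++ t1 ++ t2 ++ [:: w1; w2; w3] ++ t4 = u3 ++ t4 by rewrite /u3 /u2 /u1 !catA.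
rewrite (_ : (s + 6 * n + 6 + 2 * j = s + 6 * n + 5 + 2 * j + 1)%N); last lia.
rewrite Hv4 // HC /u3 !nth_catl ?Hu2 //; try lia.
by rewrite /w3 /w1 /w2 Ee2 Ep2 Ee Ep E.
Qed.

End SLPlemmas.

Section Prog.
Variable F : fieldType.
Variable q n : nat.

Definition N0 := (2 * n + n * n.+1)%N.
Definition Sk k := (N0 + 2 + k * (8 * n + 5))%N.
Definition Lidx k j := if k is k'.+1 then (Sk k' + 6 * n + 6 + 2 * j)%N else N0.
Definition Pidx k j := if k is k'.+1 then (2 * n + k' * n.+1 + j)%N
                       else if j == 0%N then N0.+1 else N0.
Fixpoint blocks k : seq (instr F) :=
  if k is k'.+1 then blocks k' ++ blk F n (Sk k') k' (n + k') (Lidx k') (Pidx k')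
  else [::].
Definition prog := [:: IConst (0 : F); IConst (1 : F)] ++ blocks n.
Definition outs := [seq Lidx n j | j <- iota 0 n].

Lemma cost_cat (P1 P2 : seq (instr F)) : cost (P1 ++ P2) = (cost P1 + cost P2)%N.
Proof. by rewrite /cost count_cat. Qed.

Lemma cost_dotp s G L m : cost (dotp F s G L m) = (2 * m)%N.
Proof. elim: m => [|m IH] //=; rewrite cost_cat IH /cost /=; lia. Qed.

Lemma cost_upd s0 C L P m : cost (upd F s0 C L P m) = (2 * m)%N.
Proof. elim: m => [|m IH] //=; rewrite cost_cat IH /cost /=; lia. Qed.

Lemma cost_prog : (cost prog <= 9 * n ^ 2)%N.
Proof.
have H : forall k, cost (blocks k) = (k * (6 * n + 3))%N.
  elim=> [|k IH] //=; rewrite cost_cat IH /blk !cost_cat !cost_dotp cost_upd /cost /=; lia.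
rewrite /prog cost_cat H /cost /=; nia.
Qed.

Variable st0 : seq F.
Hypothesis Hst0 : size st0 = N0.
Let stb := st0 ++ [:: 0; 1].
Definition gv k := st0`_k.
Definition rv k := st0`_(n + k).
Definition pv k j := stb`_(Pidx k j).
Definition ev (v : nat -> F) k := \sum_(j < n) v j * gv k ^+ (q ^ j).
Fixpoint lam k j := if k is k'.+1 then
   lam k' j + ((rv k' - ev (lam k') k') / ev (pv k') k') * pv k' j else 0.

Lemma run_blocks k : (k <= n)%N -> (forall k', (k' < k)%N -> ev (pv k') k' != 0) ->
  exists t, run q stb (blocks k) = Some (stb ++ t) /\ size (stb ++ t) = Sk k /\
    forall j, (j < n)%N -> (stb ++ t)`_(Lidx k j) = lam k j.
Proof.
have Hsb : size stb = (N0 + 2)%N by rewrite size_cat Hst0.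
elim: k => [|k IH] Hk Hp.
  exists [::]; rewrite cats0; split=> //; split; first by rewrite Hsb /Sk; lia.
  by move=> j _ /=; rewrite nth_cat Hst0 ltnn subnn.
have [t [Hr [Hs Hv]]] := IH (ltnW Hk) (fun k' hk => Hp k' (ltnW hk)).
set st := stb ++ t.
have E : forall i, (i < N0 + 2)%N -> st`_i = stb`_i.
  by move=> i hi; rewrite /st nth_catl // Hsb.
have E0 : forall i, (i < N0)%N -> stb`_i = st0`_i.
  by move=> i hi; rewrite /stb nth_catl // Hst0.
have HG : (k < Sk k)%N by rewrite /Sk /N0; lia.
have HR : (n + k < Sk k)%N by rewrite /Sk /N0; lia.
have HLP : forall j, (j < n)%N -> (Lidx k j < Sk k)%N /\ (Pidx k j < Sk k)%N.
  move=> j hj; case: k {IH Hk Hp Hr Hs Hv st E HG HR} (Hk) => [|k] Hk /=.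
    by case: (j == 0%N); rewrite /Sk; lia.
  rewrite /Sk /N0; split; nia.
have HPk : forall j, (j < n)%N -> (Pidx k j < N0 + 2)%N.
  move=> j hj; case: k {IH Hk Hp Hr Hs Hv st E HG HR HLP} (Hk) => [|k] Hk /=.
    by case: (j == 0%N); lia.
  rewrite /N0; nia.
have Ep : \sum_(j < n) st`_(Pidx k j) * st`_k ^+ (q ^ j) = ev (pv k) k.
  apply: eq_bigr => j _; rewrite E ?HPk // E; last by rewrite /N0; lia.
  rewrite (E0 k) //; rewrite /N0; lia.
have Hpk : \sum_(j < n) st`_(Pidx k j) * st`_k ^+ (q ^ j) != 0 by rewrite Ep; exact: Hp.
have [t' [Hr' [Ht' Hv']]] := run_blk Hs HG HR HLP Hpk.
exists (t ++ t'); split.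
  by rewrite /= run_cat Hr -/st Hr' /st catA.
split; first by rewrite catA -/st size_cat Hs Ht' /Sk; lia.
move=> j hj; rewrite catA -/st /= Hv' // Ep.
rewrite (_ : \sum_(j < n) st`_(Lidx k j) * st`_k ^+ (q ^ j) = ev (lam k) k).
  rewrite Hv // -/st (E (Pidx k j)) ?HPk // (E (n + k)%N); last by rewrite /N0; lia.
  by rewrite (E0 (n + k)%N) //; rewrite /N0; lia.
apply: eq_bigr => i _; rewrite Hv // -/st (E k); last by rewrite /N0; lia.
by rewrite (E0 k) //; rewrite /N0; lia.
Qed.

Lemma run_prog : (forall k', (k' < n)%N -> ev (pv k') k' != 0) ->
  exists st, run q st0 prog = Some st /\ forall j, (j < n)%N -> st`_(nth 0%N outs j) = lam n j.
Proof.
move=> Hp; have [t [Hr [_ Hv]]] := run_blocks (leqnn n) Hp.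
exists (stb ++ t); split; first by rewrite /prog run_cat /= -!cats1 -catA Hr.
by move=> j hj; rewrite /outs (nth_map 0%N) ?size_iota // nth_iota // add0n Hv.
Qed.

Lemma ev_lin (a c : nat -> F) (x : F) l :
  ev (fun j => a j + x * c j) l = ev a l + x * ev c l.
Proof.
rewrite /ev mulr_sumr -big_split; apply: eq_bigr => j _ /=; ring.
Qed.

Lemma lam_interp :
  (forall k, (k < n)%N -> ev (pv k) k != 0) ->
  (forall k l, (k < n)%N -> (l < k)%N -> ev (pv k) l = 0) ->
  forall l, (l < n)%N -> ev (lam n) l = rv l.
Proof.
move=> HA HB.
suff H : forall k, (k <= n)%N -> forall l, (l < k)%N -> ev (lam k) l = rv l.
  by move=> l hl; exact: H.
elim=> [|k IH] hk l hl //=.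
rewrite ev_lin.
have hkn : (k < n)%N by [].
rewrite ltnS leq_eqVlt in hl; case/orP: hl => [/eqP ->| hl].
  by field; exact: HA.
by rewrite IH ?(ltnW hk) // (HB k l) // mulr0 addr0.
Qed.

End Prog.


Section Cramer.
Variable F : finFieldType.
Variable q n : nat.
Variables g r : 'I_n -> F.

Lemma unlift_widen (i : 'I_n) : unlift ord_max (widen_ord (leqnSn n) i) = Some i.
Proof.
have -> : widen_ord (leqnSn n) i = lift ord_max i by apply: val_inj; rewrite /= /bump leqNgt ltn_ord.
exact: liftK.
Qed.

Definition B0 : 'M[{poly F}]_n.+1 := \matrix_(a, c)
  match unlift ord_max a with
  | Some j => gxcol q g c j
  | None => if unlift ord_max c is Some l then (r l)%:P else 0
  end.

Lemma detB : \det B0 = \sum_(i < n) ((-1) ^+ (n + i)%N * r i) *: \det (Dmat q g i).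
Proof.
rewrite (expand_det_row _ ord_max) big_ord_recr /= !mxE !unlift_none mul0r addr0.
apply: eq_bigr => i _; rewrite !mxE unlift_none unlift_widen /cofactor.
have -> : row' ord_max (col' (widen_ord (leqnSn n) i) B0) = Dmat q g i.
  by apply/matrixP => a l; rewrite !mxE liftK.
by rewrite /= -mul_polyC rmorphM /= rmorph_sign mulrCA mulrA.
Qed.

Lemma sign_aux (i : 'I_n) : (-1) ^+ (n + i)%N = - (-1) ^+ (n - i.+1)%N :> F.
Proof.
rewrite (_ : (n + i = (n - i.+1) + (i + i).+1)%N); last by have := ltn_ord i; lia.
rewrite exprD exprS -(signr_odd _ (i + i)%N) oddD addbb /=; ring.
Qed.

Lemma qLag_B : qLagrange q g r = - (\det (moore q g))^-1 *: \det B0.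
Proof.
rewrite detB scaler_sumr /qLagrange; apply: eq_bigr => i _.
by rewrite scalerA sign_aux; congr (_ *: _); ring.
Qed.

Lemma B_lin : exists aL : 'I_n -> F, \det B0 = \sum_(j < n) aL j *: 'X^(q ^ j).
Proof.
pose M1 (j : 'I_n) := map_mx (fun p : {poly F} => p`_0)
   (row' (widen_ord (leqnSn n) j) (col' ord_max B0)).
have Hc : forall j : 'I_n, row' (widen_ord (leqnSn n) j) (col' ord_max B0) =
     map_mx polyC (M1 j).
  move=> j; apply/matrixP => a c; rewrite !mxE /gxcol liftK.
  by case: unlift => [jj|] /=; rewrite coefC.
exists (fun j : 'I_n => (-1) ^+ (j + n)%N * \det (M1 j)).
rewrite (expand_det_col _ ord_max) big_ord_recr /= !mxE !unlift_none mul0r addr0.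
apply: eq_bigr => j _; rewrite !mxE unlift_widen /gxcol unlift_none /cofactor Hc.
rewrite det_map_mx /= -mul_polyC rmorphM /= rmorph_sign mulrC.
done.
Qed.

Lemma B_eval (l : 'I_n) : (\det B0).[g l] = - r l * \det (moore q g).
Proof.
set x := g l.
rewrite -horner_evalE -det_map_mx.
set Bx := map_mx (horner_eval x) B0.
set wl := widen_ord (leqnSn n) l.
have Hwl : wl != ord_max by rewrite -val_eqE /= neq_ltn ltn_ord.
set U : 'M[F]_n.+1 := 1%:M - delta_mx wl ord_max.
have dU : \det U = 1.
  rewrite -det_tr det_trig.
    apply: big1 => i _; rewrite !mxE eqxx /=.
    by case: (i =P wl) => [->|] /=; rewrite ?(negbTE Hwl) ?andbF subr0.
  apply/is_trig_mxP => i j hij; rewrite !mxE.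
  have -> : (j == i) = false by apply/negbTE; rewrite neq_ltn hij orbT.
  have -> : (i == ord_max) = false.
    by apply/negbTE; rewrite -val_eqE /= neq_ltn (leq_trans hij) // -ltnS.
  by rewrite andbF subr0.
have Hmul : forall (A : 'M[F]_n.+1) (a c : 'I_n.+1),
    (A *m delta_mx wl (@ord_max n)) a c = if c == ord_max then A a wl else 0.
  move=> A a c; rewrite mxE (bigD1 wl) //= mxE eqxx /= big1 ?addr0.
    by rewrite eq_sym; case: eqP => _; rewrite ?mulr1 ?mulr0.
  by move=> k /negPf hk; rewrite mxE hk mulr0.
set C := Bx *m U.
have dC : \det C = \det Bx by rewrite det_mulmx dU mulr1.
have EC : forall a c, C a c = Bx a c - (if c == ord_max then Bx a wl else 0).
  by move=> a c; rewrite /C /U mulmxBr mulmx1 mxE [X in _ + X]mxE Hmul.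
rewrite -dC (expand_det_col _ ord_max) big_ord_recr /= big1 ?add0r.
  rewrite EC eqxx /Bx !mxE !unlift_none /wl unlift_widen /= !horner_evalE horner0 hornerC sub0r.
  rewrite /cofactor.
  have -> : row' ord_max (col' ord_max C) = moore q g.
    apply/matrixP => a c; rewrite mxE mxE EC.
    rewrite eq_sym (negbTE (neq_lift _ _)) subr0 /Bx !mxE !liftK /gxcol liftK /=.
    by rewrite horner_evalE hornerC.
  rewrite -signr_odd addnn odd_double /=. by rewrite expr0 mul1r.
move=> j _; rewrite EC eqxx /Bx !mxE unlift_widen /gxcol unlift_none /wl unlift_widen.
by rewrite /= !horner_evalE hornerXn hornerC /qpow subrr mul0r.
Qed.

End Cramer.


Section Ann.
Variable F : finFieldType.
Variables q m : nat.
Hypothesis Hq : prime_power q.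
Hypothesis HF : #|F| = (q ^ m)%N.

Lemma q_gt1 : (1 < q)%N.
Proof.
case: Hq => p [k [pp hk ->]].
exact: leq_trans (prime_gt1 pp) (leq_pexp2l (prime_gt0 pp) hk).
Qed.

Lemma inFqN1 : inFq q (-1 : F).
Proof.
case: Hq => p [k [pp hk Eq]].
have pc : p \in [pchar F].
  by apply: (card_finPcharP (n := (k * m)%N)) => //; rewrite HF Eq expnM.
rewrite /inFq exprNn_pchar ?expr1n //.
by rewrite Eq pnatX pnatE // pc.
Qed.

Lemma inFq0 : inFq q (0 : F).
Proof. by rewrite /inFq expr0n gtn_eqF ?(ltn_trans _ q_gt1). Qed.

Lemma inFq1 : inFq q (1 : F).
Proof. by rewrite /inFq expr1n. Qed.

Lemma card_inFq : (#|[pred x : F | inFq q x]| <= q)%N.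
Proof.
set P : {poly F} := 'X^q - 'X.
have sP : size P = q.+1.
  rewrite /P size_addl ?size_polyXn // size_opp size_polyX; exact: q_gt1.
have P0 : P != 0 by rewrite -size_poly_eq0 sP.
have := max_poly_roots P0 (rs := enum [pred x : F | inFq q x]).
rewrite sP ltnS cardE; apply.
  apply/allP => x; rewrite mem_enum inE /inFq => /eqP hx.
  by rewrite /root /P !hornerE hx subrr.
exact: enum_uniq.
Qed.

Lemma card_span k (gk : 'I_k -> F) : (#|[pred u | in_span q gk u]| <= q ^ k)%N.
Proof.
set D := [set c : {ffun 'I_k -> F} | [forall i, inFq q (c i)]].
set f := fun c : {ffun 'I_k -> F} => \sum_(i < k) c i * gk i.
have sub : [pred u | in_span q gk u] \subset f @: D.
  apply/subsetP => u; rewrite inE => /existsP [c /andP [hc /eqP ->]].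
  by apply/imsetP; exists c; rewrite // inE.
apply: leq_trans (subset_leq_card sub) _; apply: leq_trans (leq_imset_card _ _) _.
have -> : #|D| = (#|[pred x : F | inFq q x]| ^ #|'I_k|)%N.
  rewrite -card_ffun_on.
  apply: eq_card => c; rewrite inE; apply/forallP/ffun_onP => h x; by have := h x.
rewrite card_ord.
case: k {gk D f sub} => [|k]; first by rewrite !expn0.
by rewrite leq_exp2r // card_inFq.
Qed.

Lemma ann_eq k (gk : 'I_k -> F) :
  annPoly q gk = \prod_(u <- enum [pred u | in_span q gk u]) ('X - u%:P).
Proof. by rewrite /annPoly big_enum. Qed.

Lemma ann_root k (gk : 'I_k -> F) x : root (annPoly q gk) x = in_span q gk x.
Proof. by rewrite ann_eq root_prod_XsubC mem_enum inE. Qed.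

Lemma ann_size k (gk : 'I_k -> F) :
  size (annPoly q gk) = #|[pred u | in_span q gk u]|.+1.
Proof. by rewrite ann_eq size_prod_XsubC cardE. Qed.

Variable n : nat.
Variable g : 'I_n -> F.
Variable b : 'I_n -> 'I_n.+1 -> F.
Hypothesis Hind : lin_indep_Fq q g.
Hypothesis Hb : forall i : 'I_n,
  annPoly q (gprefix g i) = \sum_(j < n.+1) b i j *: 'X^(q ^ j).

Lemma ann_horner (i : 'I_n) x :
  (annPoly q (gprefix g i)).[x] = \sum_(j < n.+1) b i j * x ^+ (q ^ j).
Proof.
by rewrite Hb horner_sum; apply: eq_bigr => j _; rewrite hornerZ hornerXn.
Qed.

Lemma b_top (i : 'I_n) : (i.+1 < n)%N -> b i ord_max = 0.
Proof.
move=> hi.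
have q1 := q_gt1.
have : (annPoly q (gprefix g i))`_(q ^ n) = b i ord_max.
  rewrite Hb coef_sum (bigD1 ord_max) //= coefZ coefXn eqxx mulr1 big1 ?addr0 //.
  move=> j hj; rewrite coefZ coefXn eqn_exp2l //.
  have -> : (n == j) = false by apply/negbTE; rewrite eq_sym; exact: hj.
  by rewrite mulr0.
rewrite nth_default // ann_size.
apply: leq_trans (_ : (q ^ i.+1).+1 <= q ^ n)%N.
  by rewrite ltnS card_span.
have h1 : (q ^ i.+2 <= q ^ n)%N by rewrite leq_pexp2l // ltnW.
have h2 : (0 < q ^ i.+1)%N by rewrite expn_gt0 ltnW.
have h3 : (q ^ i.+2 = q * q ^ i.+1)%N by rewrite expnS.
apply: leq_trans h1; rewrite h3; move: (q ^ i.+1)%N h2 => X h2; nia.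
Qed.

Lemma ann_horner' (i : 'I_n) x : (i.+1 < n)%N ->
  (annPoly q (gprefix g i)).[x] =
     \sum_(j < n) b i (widen_ord (leqnSn n) j) * x ^+ (q ^ j).
Proof.
by move=> hi; rewrite ann_horner big_ord_recr /= b_top // mul0r addr0.
Qed.

Lemma ann_zero (i l : 'I_n) : (l <= i)%N -> (annPoly q (gprefix g i)).[g l] = 0.
Proof.
move=> hl; apply/eqP; rewrite -/(root _ _) ann_root.
have hl' : (l < i.+1)%N by [].
set l' : 'I_i.+1 := Ordinal hl'.
apply/existsP; exists [ffun t => ((t == l')%:R : F)]; apply/andP; split.
  by apply/forallP => t; rewrite ffunE; case: eqP => _; rewrite ?inFq1 ?inFq0.
rewrite (bigD1 l') //= ffunE eqxx mul1r big1 ?addr0.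
  by apply/eqP; rewrite /gprefix; congr g; apply: val_inj.
by move=> t /negPf ht; rewrite ffunE ht mul0r.
Qed.

Lemma ann_nz (i k : 'I_n) : k = i.+1 :> nat -> (annPoly q (gprefix g i)).[g k] != 0.
Proof.
move=> hk; rewrite -[_ != 0]/(~~ root _ _) ann_root.
apply/negP => /existsP [c /andP [/forallP hc /eqP hu]].
pose c' : 'I_n -> F := fun t =>
  if (t < i.+1)%N then c (inord t) else if t == k then -1 else 0.
have Hc' : forall t, inFq q (c' t).
  move=> t; rewrite /c'; case: ifP => _; first exact: hc.
  by case: ifP => _; [exact: inFqN1 | exact: inFq0].
have Hs : \sum_(t < n) c' t * g t = 0.
  rewrite (bigID (fun t : 'I_n => (t < i.+1)%N)) /=.
  rewrite (big_ord_narrow_cond (P := predT) (F := fun t => c' t * g t) (ltn_ord i)) /=.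
  rewrite (bigD1 k) /=; last by rewrite hk ltnn.
  rewrite [X in _ + (_ + X)]big1; last first.
    by move=> t /andP [ht hkt]; rewrite /c' (negbTE ht) (negbTE hkt) mul0r.
  rewrite addr0 /c' eqxx hk ltnn.
  have -> : \sum_(s < i.+1) (if (widen_ord (ltn_ord i) s < i.+1)%N then c (inord (widen_ord (ltn_ord i) s)) else
              (if widen_ord (ltn_ord i) s == k then -1 else 0)) *
                g (widen_ord (ltn_ord i) s) = \sum_(s < i.+1) c s * gprefix g i s.
    by apply: eq_bigr => s _; rewrite /= ltn_ord inord_val.
  by rewrite -hu mulN1r subrr.
have := Hind Hc' Hs k; rewrite /c' hk ltnn eqxx => /eqP.
by rewrite oppr_eq0 oner_eq0.
Qed.

Lemma g_nz (l : 'I_n) : g l != 0.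
Proof.
apply/negP => /eqP hl.
pose c : 'I_n -> F := fun t => (t == l)%:R.
have Hc : forall t, inFq q (c t).
  by move=> t; rewrite /c; case: eqP => _; rewrite ?inFq1 ?inFq0.
have Hs : \sum_(t < n) c t * g t = 0.
  by apply: big1 => t _; rewrite /c; case: eqP => [->|_]; rewrite ?hl ?mulr0 ?mul0r.
by have := Hind Hc Hs l; rewrite /c eqxx => /eqP; rewrite oner_eq0.
Qed.

End Ann.


Lemma nth_flatten_const (T : Type) (x0 : T) k (s : seq (seq T)) i j :
  all (fun x => size x == k) s -> (i < size s)%N -> (j < k)%N ->
  nth x0 (flatten s) (i * k + j) = nth x0 (nth [::] s i) j.
Proof.
elim: s i => [|x s IH] i //= /andP [/eqP hx hs] hi hj.
case: i hi => [|i] hi /=; first by rewrite mul0n add0n nth_cat hx hj.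
rewrite nth_cat hx mulSn -addnA ltnNge leq_addr /= addKn IH //.
Qed.

Lemma size_flatten_const (T : Type) k (s : seq (seq T)) :
  all (fun x => size x == k) s -> size (flatten s) = (size s * k)%N.
Proof.
elim: s => [|x s IH] //= /andP [/eqP hx hs]; rewrite size_cat hx IH //; lia.
Qed.

Section Final.
Variable F : finFieldType.
Variables q m n : nat.
Hypothesis Hq : prime_power q.
Hypothesis HF : #|F| = (q ^ m)%N.
Variable g : 'I_n -> F.
Variable b : 'I_n -> 'I_n.+1 -> F.
Hypothesis Hind : lin_indep_Fq q g.
Hypothesis Hb : forall i : 'I_n,
  annPoly q (gprefix g i) = \sum_(j < n.+1) b i j *: 'X^(q ^ j).

Let allb : all (fun x => size x == n.+1)
   [seq [seq b i j | j <- enum 'I_n.+1] | i <- enum 'I_n].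
Proof. by apply/allP => x /mapP [i _ ->]; rewrite size_map size_enum_ord. Qed.

Lemma inputsE r : slp_inputs g r b = [seq g i | i <- enum 'I_n] ++
  [seq r i | i <- enum 'I_n] ++ flatten [seq [seq b i j | j <- enum 'I_n.+1] | i <- enum 'I_n].
Proof. by []. Qed.

Lemma size_inputs r : size (slp_inputs g r b) = N0 n.
Proof.
rewrite inputsE !size_cat (size_flatten_const allb) (size_map g) (size_map r) (size_map (fun i => [seq b i j | j <- enum _])) size_enum_ord /N0; lia.
Qed.

Lemma inp_g r (l : 'I_n) : (slp_inputs g r b)`_l = g l.
Proof.
by rewrite inputsE nth_cat size_map size_enum_ord ltn_ord (nth_map l) ?nth_ord_enum // size_enum_ord.
Qed.

Lemma inp_r r (l : 'I_n) : (slp_inputs g r b)`_(n + l) = r l.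
Proof.
have e : (n + l = size [seq g i | i <- enum 'I_n] + l)%N by rewrite (size_map g) size_enum_ord.
rewrite inputsE e nth_catr.
by rewrite nth_cat size_map size_enum_ord ltn_ord (nth_map l) ?nth_ord_enum // size_enum_ord.
Qed.

Lemma inp_b r (i : 'I_n) (j : 'I_n.+1) : (slp_inputs g r b)`_(2 * n + i * n.+1 + j) = b i j.
Proof.
have e : (2 * n + i * n.+1 + j = size [seq g i | i <- enum 'I_n] +
    (size [seq r i | i <- enum 'I_n] + (i * n.+1 + j)))%N.
  by rewrite (size_map g) (size_map r) size_enum_ord; lia.
rewrite inputsE e nth_catr nth_catr nth_flatten_const //.
  rewrite (nth_map i) ?size_enum_ord // nth_ord_enum.
  by rewrite (nth_map j) ?size_enum_ord // nth_ord_enum.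
by rewrite size_map size_enum_ord.
Qed.

Lemma pv0 r j : (j < n)%N -> pv n (slp_inputs g r b) 0 j = (j == 0%N)%:R.
Proof.
move=> hj; rewrite /pv /Pidx; have hs := size_inputs r.
case: eqP => _.
  by rewrite -hs (_ : (size _).+1 = size (slp_inputs g r b) + 1)%N ?nth_catr // addn1.
by rewrite -hs -[size _]addn0 nth_catr.
Qed.

Lemma pvS r (i : 'I_n) (j : 'I_n.+1) : pv n (slp_inputs g r b) i.+1 j = b i j.
Proof.
rewrite /pv /= nth_catl ?inp_b // size_inputs /N0.
have := ltn_ord i; have := ltn_ord j; nia.
Qed.

Lemma evA r k : (k < n)%N -> ev q n (slp_inputs g r b) (pv n (slp_inputs g r b) k) k != 0.
Proof.
move=> hk; rewrite /ev /gv.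
case: k hk => [|i] hk.
  rewrite (bigD1 (Ordinal hk)) //= pv0 // eqxx mul1r expn0 expr1 big1 ?addr0.
    by rewrite (inp_g r (Ordinal hk)); exact: (g_nz Hq Hind).
  move=> j hj; rewrite pv0 //.
  have -> : (j == 0%N :> nat) = false by apply/negbTE; rewrite -val_eqE /= in hj.
  by rewrite mul0r.
have hi : (i < n)%N by apply: ltn_trans hk.
have -> : \sum_(j < n) pv n (slp_inputs g r b) i.+1 j * (slp_inputs g r b)`_i.+1 ^+ (q ^ j)
    = (annPoly q (gprefix g (Ordinal hi))).[g (Ordinal hk)].
  rewrite (ann_horner' Hq HF Hb) //; apply: eq_bigr => j _.
  by rewrite (inp_g r (Ordinal hk)) -(pvS r (Ordinal hi) (widen_ord (leqnSn n) j)).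
exact: (ann_nz Hq HF Hind).
Qed.

Lemma evB r k l : (k < n)%N -> (l < k)%N ->
  ev q n (slp_inputs g r b) (pv n (slp_inputs g r b) k) l = 0.
Proof.
case: k => [|i] // hk hl; rewrite /ev /gv.
have hi : (i < n)%N by apply: ltn_trans hk.
have hl' : (l < n)%N by apply: ltn_trans hk.
have -> : \sum_(j < n) pv n (slp_inputs g r b) i.+1 j * (slp_inputs g r b)`_l ^+ (q ^ j)
    = (annPoly q (gprefix g (Ordinal hi))).[g (Ordinal hl')].
  rewrite (ann_horner' Hq HF Hb) //; apply: eq_bigr => j _.
  by rewrite (inp_g r (Ordinal hl')) -(pvS r (Ordinal hi) (widen_ord (leqnSn n) j)).
by apply: (ann_zero Hq); rewrite /= -ltnS.
Qed.

Lemma interp r (l : 'I_n) :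
  \sum_(j < n) lam q n (slp_inputs g r b) n j * g l ^+ (q ^ j) = r l.
Proof.
have := lam_interp (@evA r) (@evB r) (ltn_ord l).
by rewrite /ev /gv /rv inp_g inp_r.
Qed.

Lemma final_eq r :
  qLagrange q g r = \sum_(j < n) lam q n (slp_inputs g r b) n j *: 'X^(q ^ j).
Proof.
pose a (l : 'I_n) (j : 'I_n) := lam q n (slp_inputs g (fun t => (t == l)%:R) b) n j.
pose Bm : 'M[F]_n := \matrix_(l, j) a l j.
have HBM : Bm *m moore q g = 1%:M.
  apply/matrixP => l c; rewrite !mxE.
  under eq_bigr do rewrite !mxE.
  by rewrite /a /qpow (interp (fun t => (t == l)%:R) c) eq_sym.
have Hd : \det (moore q g) != 0.
  apply/negP => /eqP h; have := congr1 determinant HBM.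
  by rewrite det_mulmx h mulr0 det1 => /eqP; rewrite eq_sym oner_eq0.
have HMB : moore q g *m Bm = 1%:M by apply: mulmx1C.
have [aL HaL] := B_lin q g r.
pose aQ j := - (\det (moore q g))^-1 * aL j.
have HQ : qLagrange q g r = \sum_(j < n) aQ j *: 'X^(q ^ j).
  rewrite qLag_B HaL scaler_sumr; apply: eq_bigr => j _; by rewrite scalerA.
have evQ : forall l : 'I_n, \sum_(j < n) aQ j * g l ^+ (q ^ j) = r l.
  move=> l; have : (qLagrange q g r).[g l] = r l.
    by rewrite qLag_B hornerZ B_eval; field.
  rewrite HQ horner_sum => <-.
  by apply: eq_bigr => j _; rewrite hornerZ hornerXn.
pose vQ : 'rV[F]_n := \row_j aQ j.
pose vA : 'rV[F]_n := \row_j lam q n (slp_inputs g r b) n j.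
have E : vQ *m moore q g = vA *m moore q g.
  apply/matrixP => i c; rewrite !mxE.
  under eq_bigr do rewrite !mxE.
  under [in RHS]eq_bigr do rewrite !mxE.
  by rewrite /qpow evQ interp.
have Hv : vQ = vA by rewrite -[vQ]mulmx1 -HMB mulmxA E -mulmxA HMB mulmx1.
rewrite HQ; apply: eq_bigr => j _; congr (_ *: _).
by have := congr1 (fun M : 'rV[F]_n => M 0 j) Hv; rewrite /= !mxE.
Qed.

End Final.

Theorem lemma37 :
  exists C : nat,
  forall (F : finFieldType) (q m n : nat),
    prime_power q -> (0 < m)%N -> #|F| = (q ^ m)%N ->
    exists (P : seq (instr F)) (out : seq nat),
      size out = n /\ (cost P <= C * n ^ 2)%N /\
      forall (g r : 'I_n -> F) (b : 'I_n -> 'I_n.+1 -> F),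
        lin_indep_Fq q g ->
        (forall i : 'I_n,
           annPoly q (gprefix g i) = \sum_(j < n.+1) b i j *: 'X^(q ^ j)) ->
        exists st : seq F,
          run q (slp_inputs g r b) P = Some st /\
          qLagrange q g r = \sum_(j < n) st`_(nth 0%N out j) *: 'X^(q ^ j).
Proof.
exists 9%N => F q m n Hq Hm HF.
exists (prog F n), (outs n); split; first by rewrite /outs size_map size_iota.
split; first exact: cost_prog.
move=> g r b Hind Hb.
have [st [Hrun Hst]] := run_prog (q := q) (size_inputs HF g b r) (evA Hq HF Hind Hb r).
exists st; split => //.
rewrite (final_eq Hq HF Hind Hb r); apply: eq_bigr => j _; by rewrite Hst.
Qed.
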